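(* For all integers $m\ge1$, $r\ge0$ and $n\ge0$, $$\mathcal E_n(x)=\sum_{k=0}^n\sum_{l=k}^n\binom nl\,\mathcal E_{n-l}\,w_{m,r}(l,k)\,\mathcal D_{m,r}(k,x).$$
   Context: The Euler polynomials are defined by $\sum_{n\ge0}\mathcal E_n(x)\frac{t^n}{n!}=\frac{2e^{xt}}{e^t+1}$ and $\mathcal E_n:=\mathcal E_n(0)$. For integers $m\ge1$, $n,k,r\ge0$: the $r$-Whitney numbers of the first kind $w_{m,r}(n,k)$ are defined by $\sum_{n\ge k}w_{m,r}(n,k)\frac{z^n}{n!}=(1+mz)^{-r/m}\frac{\ln^k(1+mz)}{m^kk!}$; the $r$-Whitney numbers of the second kind $W_{m,r}(n,k)$ by $\sum_{n\ge k}W_{m,r}(n,k)\frac{z^n}{n!}=\frac{e^{rz}}{k!}\left(\frac{e^{mz}-1}{m}\right)^k$; and the $r$-Dowling polynomial is $\mathcal D_{m,r}(n,u):=\sum_{k=0}^nW_{m,r}(n,k)u^k$. *)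

(* Defs.v *)
(* Exponential generating functions are represented by their
   coefficient sequences: a series  sum_n f n * z^n / n!  is the function f. *)
From HB Require Import structures.
From mathcomp Require Import all_boot all_order all_algebra.
Set Implicit Arguments. Unset Strict Implicit. Unset Printing Implicit Defensive.
Import Order.TTheory GRing.Theory Num.Theory.
Local Open Scope ring_scope.

Section EGF.
Variable R : numFieldType.

Definition egf_one : nat -> R := fun n => (n == 0)%:R.
Definition egf_add (f g : nat -> R) : nat -> R := fun n => f n + g n.
Definition egf_sub (f g : nat -> R) : nat -> R := fun n => f n - g n.
Definition egf_scale (c : R) (f : nat -> R) : nat -> R := fun n => c * f n.
(* product of EGFs = binomial convolution of coefficients *)
Definition egf_mul (f g : nat -> R) : nat -> R :=
  fun n => \sum_(k < n.+1) 'C(n, k)%:R * f k * g (n - k)%N.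
Definition egf_pow (f : nat -> R) (k : nat) : nat -> R := iter k (egf_mul f) egf_one.
Definition egf_exp (c : R) : nat -> R := fun n => c ^+ n.
(* ln(1 + c z) = sum_{n>=1} (-1)^{n-1} c^n z^n / n *)
Definition egf_log1p (c : R) : nat -> R :=
  fun n => if n is 0 then 0 else (-1) ^+ n.-1 * c ^+ n * n`!%:R / n%:R.
(* (1 + c z)^a = sum_n binom(a,n) c^n z^n, binom(a,n) = prod_{i<n}(a-i)/n! *)
Definition egf_binom (a c : R) : nat -> R :=
  fun n => \prod_(i < n) (a - i%:R) * c ^+ n.
(* multiplicative inverse of an EGF with nonzero constant term *)
Fixpoint egf_inv_aux (f : nat -> R) (fuel n : nat) : R :=
  match fuel with
  | 0 => (f 0%N)^-1
  | fuel'.+1 =>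
      if n == 0%N then (f 0%N)^-1
      else - (f 0%N)^-1 *
           \sum_(k < n) 'C(n, k.+1)%:R * f k.+1 * egf_inv_aux f fuel' (n - k.+1)%N
  end.
Definition egf_inv (f : nat -> R) : nat -> R := fun n => egf_inv_aux f n n.

End EGF.

(* Euler polynomials: sum_n E_n(x) t^n/n! = 2 e^{xt} / (e^t + 1) *)
Definition euler_poly (R : numFieldType) (n : nat) (x : R) : R :=
  egf_mul (egf_scale 2 (egf_exp x)) (egf_inv (egf_add (egf_exp 1) (@egf_one R))) n.
Definition euler_num (R : numFieldType) (n : nat) : R := euler_poly n 0.

(* r-Whitney numbers of the first kind:
   sum_n w(n,k) z^n/n! = (1+mz)^{-r/m} ln^k(1+mz) / (m^k k!) *)
Definition whitney1 (R : numFieldType) (m r n k : nat) : R :=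
  egf_mul (egf_binom (- (r%:R / m%:R)) m%:R)
          (egf_scale ((m%:R ^+ k * k`!%:R)^-1) (egf_pow (egf_log1p (m%:R : R)) k)) n.

(* r-Whitney numbers of the second kind:
   sum_n W(n,k) z^n/n! = e^{rz}/k! * ((e^{mz}-1)/m)^k *)
Definition whitney2 (R : numFieldType) (m r n k : nat) : R :=
  egf_mul (egf_exp r%:R)
          (egf_scale (k`!%:R^-1)
             (egf_pow (egf_scale (m%:R^-1) (egf_sub (egf_exp (m%:R : R)) (@egf_one R))) k)) n.

Definition dowling (R : numFieldType) (m r n : nat) (u : R) : R :=
  \sum_(k < n.+1) whitney2 R m r n k * u ^+ k.

(* Main.v *)
Require Import Defs.
From HB Require Import structures.
From mathcomp Require Import all_boot all_order all_algebra.
From mathcomp Require Import ring lra.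
From Stdlib Require Import FunctionalExtensionality.
Import Order.TTheory GRing.Theory Num.Theory.
Local Open Scope ring_scope.

Section S.
Variable R : numFieldType.
Implicit Types f g h : nat -> R.

Definition sh f : nat -> R := fun n => f n.+1.
Definition Yop (c : R) f : nat -> R := egf_add (sh f) (egf_scale c (fun i => i%:R * f i)).

Lemma egf_mul0 f g : egf_mul f g 0 = f 0 * g 0.
Proof. by rewrite /egf_mul big_ord_recl big_ord0 /= bin0 mul1r addr0 subn0. Qed.

Lemma mulDl f g h n : egf_mul (egf_add f g) h n = egf_mul f h n + egf_mul g h n.
Proof. rewrite /egf_mul /egf_add -big_split; apply: eq_bigr => i _ /=; ring. Qed.
Lemma mulDr f g h n : egf_mul f (egf_add g h) n = egf_mul f g n + egf_mul f h n.
Proof. rewrite /egf_mul /egf_add -big_split; apply: eq_bigr => i _ /=; ring. Qed.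
Lemma mulZl c f g n : egf_mul (egf_scale c f) g n = c * egf_mul f g n.
Proof. rewrite /egf_mul /egf_scale mulr_sumr; apply: eq_bigr => i _ /=; ring. Qed.
Lemma mulZr c f g n : egf_mul f (egf_scale c g) n = c * egf_mul f g n.
Proof. rewrite /egf_mul /egf_scale mulr_sumr; apply: eq_bigr => i _ /=; ring. Qed.
Lemma mul1l f n : egf_mul (egf_one R) f n = f n.
Proof.
rewrite /egf_mul big_ord_recl big1 ?addr0 => [|i _]; last by rewrite /egf_one /= mulr0 mul0r.
by rewrite /egf_one /= bin0 subn0 !mul1r.
Qed.

Lemma mulS f g n : egf_mul f g n.+1 = egf_mul (sh f) g n + egf_mul f (sh g) n.
Proof.
rewrite /egf_mul /sh big_ord_recl /=.
under eq_bigr => i _ do rewrite /bump /= binS natrD !mulrDl subSS.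
rewrite big_split /= [LHS]addrC [X in X + _]addrC -addrA; congr (_ + _).
rewrite [in RHS]big_ord_recl [X in X + _ = _]big_ord_recr /= bin_small // mul0r mul0r addr0 addrC.
congr (_ + _); first by rewrite !bin0 !subn0.
apply: eq_big => // i _; rewrite /bump /= subnSK //.
Qed.

Lemma mulXl f g n : n%:R * egf_mul f g n.-1 = egf_mul (fun i => i%:R * f i.-1) g n.
Proof.
case: n => [|n]; first by rewrite mulr0n egf_mul0 !mul0r.
rewrite /egf_mul [RHS]big_ord_recl /= mulr0n mul0r mulr0 mul0r add0r mulr_sumr.
apply: eq_bigr => i _; rewrite /bump /= subSS.
have := congr1 (fun x => x%:R : R) (mul_bin_diag n.+1 i); rewrite !natrM /= => H.
transitivity (((n.+1)%:R * 'C(n, i)%:R) * f i * g (n - i)%N); first by ring.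
rewrite H; ring.
Qed.

Lemma mulXr f g n : n%:R * egf_mul f g n.-1 = egf_mul f (fun i => i%:R * g i.-1) n.
Proof.
case: n => [|n]; first by rewrite mulr0n egf_mul0 !mul0r mulr0.
rewrite /egf_mul [RHS]big_ord_recr /= subnn mul0r mulr0 addr0 mulr_sumr.
apply: eq_bigr => i _ /=.
have hi : (i <= n)%N by rewrite -ltnS.
rewrite (subSn hi) /=.
have := congr1 (fun x => x%:R : R) (mul_bin_down n.+1 i); rewrite !natrM /= (subSn hi) => H.
transitivity (((n.+1)%:R * 'C(n, i)%:R) * f i * g (n - i)%N); first by ring.
rewrite H; ring.
Qed.

Lemma ysh_mul c f g n :
  Yop c (egf_mul f g) n = egf_mul (Yop c f) g n + egf_mul f (Yop c g) n.
Proof.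
rewrite /Yop !mulDl !mulDr !mulZl !mulZr /egf_add /egf_scale /sh mulS.
suff -> : n%:R * egf_mul f g n =
   egf_mul (fun i => i%:R * f i) g n + egf_mul f (fun i => i%:R * g i) n by ring.
case: n => [|n]; first by rewrite !egf_mul0 mulr0n !mul0r mulr0 addr0.
rewrite mulS mulrDr mulXl mulXr /sh; congr (_ + _); congr egf_mul;
  by apply: functional_extensionality => -[|i] /=; rewrite ?mul0r.
Qed.


Lemma powS f k : egf_pow f k.+1 = egf_mul f (egf_pow f k).
Proof. by []. Qed.

Variables (m r : nat) (hm : (0 < m)%N).
Let mR : R := m%:R.
Lemma mR0 : mR != 0. Proof. by rewrite /mR pnatr_eq0 -lt0n. Qed.

Let G := egf_scale mR^-1 (egf_sub (egf_exp mR) (egf_one R)).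

Lemma shG : sh G = egf_add (egf_one R) (egf_scale mR G).
Proof.
apply: functional_extensionality => n.
rewrite /sh /G /egf_add /egf_scale /egf_sub /egf_exp /egf_one /= exprS.
have := mR0; move=> h; field; exact: h.
Qed.

Lemma sh_one : sh (egf_one R) = (fun _ => 0).
Proof. by apply: functional_extensionality. Qed.

Lemma powG k : sh (egf_pow G k) =
  egf_add (egf_scale k%:R (egf_pow G k.-1)) (egf_scale (k%:R * mR) (egf_pow G k)).
Proof.
elim: k => [|k IH].
  apply: functional_extensionality => n.
  by rewrite /egf_add /egf_scale sh_one !mul0r add0r.
apply: functional_extensionality => n.
rewrite /sh powS mulS -/(sh G) shG IH mulDl mulZl mul1l mulDr !mulZr.
rewrite /egf_add /egf_scale /=.
case: k IH => [|k] IH /=.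
  ring.
rewrite !mulrS. ring.
Qed.

Lemma W2rec n k : whitney2 R m r n.+1 k =
  (r%:R + k%:R * mR) * whitney2 R m r n k +
  (if k is k'.+1 then whitney2 R m r n k' else 0).
Proof.
rewrite /whitney2 mulS.
have -> : sh (egf_exp (r%:R : R)) = egf_scale r%:R (egf_exp r%:R).
  by apply: functional_extensionality => i; rewrite /sh /egf_scale /egf_exp exprS.
have -> : forall c f, sh (egf_scale c f) = egf_scale c (sh f) by [].
rewrite -/G powG !mulZl !mulZr mulDr !mulZr.
case: k => [|k] /=.
  rewrite !mul0r; ring.
rewrite mulZr factS natrM.
have h1 : (k`!)%:R != 0 :> R by rewrite pnatr_eq0 -lt0n fact_gt0.
have h2 : (k.+1)%:R != 0 :> R by rewrite pnatr_eq0.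
field. by rewrite h1 /= addrC natr1 h2.
Qed.


Let L := egf_log1p mR.
Let B := egf_binom (- (r%:R / mR)) mR.

Lemma YL : Yop mR L = egf_scale mR (egf_one R).
Proof.
apply: functional_extensionality => -[|i].
  rewrite /Yop /egf_add /egf_scale /sh /L /egf_log1p /egf_one /=.
  rewrite mul0r mulr0 addr0 expr0 expr1 mul1r mulr1 !mulr1n; have := mR0; move=> h.
  by rewrite divr1.
rewrite /Yop /egf_add /egf_scale /sh /L /egf_log1p /egf_one /= mulr0.
rewrite factS natrM !exprS.
have h1 : (i.+1`!)%:R != 0 :> R by rewrite pnatr_eq0 -lt0n fact_gt0.
have h2 : (i.+2)%:R != 0 :> R by rewrite pnatr_eq0.
have h3 : (i.+1)%:R != 0 :> R by rewrite pnatr_eq0.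
rewrite -[(i.+2)%:R]natr1 -[(i.+1)%:R]natr1 in h2 h3 *.
rewrite factS natrM -[(i.+1)%:R]natr1.
field. by rewrite h2 h3.
Qed.


Lemma YB : Yop mR B = egf_scale (- r%:R) B.
Proof.
apply: functional_extensionality => i.
rewrite /Yop /egf_add /egf_scale /sh /B /egf_binom big_ord_recr /= exprS.
have := mR0; move=> h. field. exact: h.
Qed.

Lemma Yscale c f : Yop mR (egf_scale c f) = egf_scale c (Yop mR f).
Proof.
apply: functional_extensionality => i.
rewrite /Yop /egf_add /egf_scale /sh; ring.
Qed.

Lemma powL k : Yop mR (egf_pow L k) = egf_scale (k%:R * mR) (egf_pow L k.-1).
Proof.
elim: k => [|k IH]; apply: functional_extensionality => n.
  rewrite /Yop /egf_add /egf_scale /sh /egf_pow /= /egf_one /=.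
  by case: n => [|n] /=; rewrite !mul0r ?mulr0 ?addr0.
rewrite powS ysh_mul YL IH mulZl mul1l mulZr /egf_scale.
case: k IH => [|k] IH /=.
  rewrite !mul0r addr0; ring.
rewrite -powS !mulrS; ring.
Qed.

Lemma W1rec n k : whitney1 R m r n.+1 k =
  - (r%:R + mR * n%:R) * whitney1 R m r n k +
  (if k is k'.+1 then whitney1 R m r n k' else 0).
Proof.
set F := egf_mul B (egf_scale ((mR ^+ k * k`!%:R)^-1) (egf_pow L k)).
have EF : forall j, whitney1 R m r j k = F j by [].
have H : Yop mR F n = F n.+1 + mR * (n%:R * F n) by [].
rewrite !EF -[F n.+1](addrK (mR * (n%:R * F n))) -H /F ysh_mul YB Yscale powL.
rewrite mulZl !mulZr -/(F n).
case: k {EF H F} => [|k] /=.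
  rewrite !mul0r mulr0 addr0; ring.
rewrite /whitney1 mulZr -/B -/L exprS factS natrM.
have h1 : (k`!)%:R != 0 :> R by rewrite pnatr_eq0 -lt0n fact_gt0.
have h3 : (k.+1)%:R != 0 :> R by rewrite pnatr_eq0.
have h := mR0.
rewrite -[(k.+1)%:R]natr1 in h3 *.
have h' : m%:R != 0 :> R by rewrite pnatr_eq0 -lt0n.
field. by rewrite h1 h3 h' expf_neq0.
Qed.


Lemma scaleE c f n : egf_scale c f n = c * f n. Proof. by []. Qed.

Lemma W2zero k : whitney2 R m r 0 k = (k == 0%N)%:R.
Proof.
rewrite /whitney2 egf_mul0 scaleE /egf_exp expr0 mul1r.
have G0 : G 0 = 0 by rewrite /G /egf_scale /egf_sub /egf_exp /egf_one expr0 subrr mulr0.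
case: k => [|k]; first by rewrite /egf_one /= invr1 mul1r.
by rewrite powS egf_mul0 -/G G0 !(mulr0, mul0r).
Qed.

Lemma W1zero k : whitney1 R m r 0 k = (k == 0%N)%:R.
Proof.
rewrite /whitney1 egf_mul0 scaleE /egf_binom big_ord0 expr0 mul1r.
case: k => [|k]; first by rewrite /egf_one /= expr0 !mul1r mulr1n invr1 mulr1.
by rewrite powS egf_mul0 {1}/egf_log1p !(mulr0, mul0r).
Qed.

Lemma W2van k j : (k < j)%N -> whitney2 R m r k j = 0.
Proof.
elim: k j => [|k IH] j hj; first by rewrite W2zero; case: j hj.
rewrite W2rec IH ?mulr0 ?add0r; last by apply: ltnW.
by case: j hj => [|j] // hj; rewrite IH.
Qed.

Lemma W1van l k : (l < k)%N -> whitney1 R m r l k = 0.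
Proof.
elim: l k => [|l IH] k hk; first by rewrite W1zero; case: k hk.
rewrite W1rec IH ?mulr0 ?add0r; last by apply: ltnW.
by case: k hk => [|k] // hk; rewrite IH.
Qed.

Lemma orth l N j : (l < N)%N ->
  \sum_(0 <= k < N) whitney1 R m r l k * whitney2 R m r k j = (l == j)%:R.
Proof.
elim: l N j => [|l IH] N j hN.
  case: N hN => // N _; rewrite big_nat_recl // W1zero /= mul1r big1 ?addr0.
    by rewrite W2zero eq_sym.
  by move=> k _; rewrite W1zero mul0r.
case: N hN => // N hN.
have E1 := IH N.+1 j (ltnW hN).
rewrite big_nat_recl // in E1.
rewrite big_nat_recl // W1rec /=.
under eq_bigr => k _ do rewrite W1rec.
rewrite (eq_bigr (fun k => - (r%:R + mR * l%:R) *
      (whitney1 R m r l k.+1 * whitney2 R m r k.+1 j) +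
      whitney1 R m r l k * whitney2 R m r k.+1 j)); last by move=> k _; ring.
rewrite big_split /= -mulr_sumr.
under eq_bigr => k _ do rewrite W2rec.
have E2 := IH N j hN.
have E0 : whitney1 R m r l 0 * whitney2 R m r 0 j = (l == j)%:R -
   \sum_(0 <= i < N) whitney1 R m r l i.+1 * whitney2 R m r i.+1 j by rewrite -E1 addrK.
case: j E0 E1 E2 => [|j] E0 E1 E2 /=.
  rewrite [X in _ + (_ + X) = _](eq_bigr (fun k => (r%:R + 0%:R * mR) *
     (whitney1 R m r l k * whitney2 R m r k 0))); last by move=> k _; ring.
  rewrite -mulr_sumr E2.
  rewrite (_ : (- (r%:R + mR * l%:R) * whitney1 R m r l 0 + 0) * whitney2 R m r 0 0 =
     - (r%:R + mR * l%:R) * (whitney1 R m r l 0 * whitney2 R m r 0 0)); last by ring.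
  rewrite E0.
  clear IH E1 E2; case: l E0 hN => [|l] E0 hN /=; rewrite /mR; ring.
rewrite [X in _ + (_ + X) = _](eq_bigr (fun k => (r%:R + j.+1%:R * mR) *
     (whitney1 R m r l k * whitney2 R m r k j.+1) +
     whitney1 R m r l k * whitney2 R m r k j)); last by move=> k _; ring.
rewrite big_split /= -mulr_sumr E2 (IH N j hN).
rewrite (_ : (- (r%:R + mR * l%:R) * whitney1 R m r l 0 + 0) * whitney2 R m r 0 j.+1 =
     - (r%:R + mR * l%:R) * (whitney1 R m r l 0 * whitney2 R m r 0 j.+1)); last by ring.
rewrite E0.
rewrite eqSS.
have [->|ne] := eqVneq l j.+1.
  rewrite (gtn_eqF (ltnSn j)).
  rewrite /mR; ring.
rewrite /=; rewrite /mR; ring.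
Qed.


Lemma key l N (x : R) : (l < N)%N ->
  \sum_(0 <= k < N) whitney1 R m r l k * dowling m r k x = x ^+ l.
Proof.
move=> hN.
have D : forall k, (k < N)%N ->
    dowling m r k x = \sum_(0 <= j < N) whitney2 R m r k j * x ^+ j.
  move=> k hk; rewrite /dowling -(big_mkord xpredT (fun j => whitney2 R m r k j * x ^+ j)).
  rewrite (big_cat_nat (leq0n k.+1) hk) /= [X in _ = _ + X]big_nat_cond [X in _ = _ + X]big1 ?addr0 //.
  by move=> j /andP[/andP[hj _] _]; rewrite W2van // mul0r.
rewrite (eq_big_nat _ _ (fun k hk => congr1 (fun y => whitney1 R m r l k * y)
   (D k (proj2 (andP hk))))).
under eq_bigr => k _ do rewrite mulr_sumr.
rewrite exchange_big_nat.
transitivity (\sum_(0 <= j < N) (if j == l then x ^+ j else 0)).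
  apply: eq_bigr => j _.
  rewrite (eq_bigr (fun k => (whitney1 R m r l k * whitney2 R m r k j) * x ^+ j));
    last by move=> k _; rewrite mulrA.
  rewrite -mulr_suml orth // eq_sym.
  by case: eqP => _; rewrite ?mul1r ?mul0r.
by rewrite -big_mkcond big_nat1_eq /= hN.
Qed.

End S.

Lemma euler_num_eq (R : numFieldType) k :
  euler_num R k = 2 * egf_inv (egf_add (egf_exp 1) (@egf_one R)) k.
Proof.
rewrite /euler_num /euler_poly /egf_mul big_ord_recl big1 => [|i _].
  by rewrite /= bin0 /egf_scale /egf_exp expr0 subn0 mulr1 mul1r addr0.
by rewrite /egf_scale /egf_exp expr0n /= mulr0 mulr0 mul0r.
Qed.

Lemma euler_poly_eq (R : numFieldType) n (x : R) :
  euler_poly n x = \sum_(0 <= l < n.+1) 'C(n, l)%:R * euler_num R (n - l) * x ^+ l.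
Proof.
rewrite /euler_poly /egf_mul big_mkord; apply: eq_bigr => i _.
rewrite euler_num_eq /egf_scale /egf_exp; ring.
Qed.

Theorem mainTheorem15 (R : numFieldType) (m r n : nat) (hm : (1 <= m)%N) (x : R) :
  euler_poly n x =
  \sum_(0 <= k < n.+1) \sum_(k <= l < n.+1)
     'C(n, l)%:R * @euler_num R (n - l) * @whitney1 R m r l k * dowling m r k x.
Proof.
have step1 : forall k, (0 <= k < n.+1)%N ->
   \sum_(k <= l < n.+1) 'C(n, l)%:R * @euler_num R (n - l) * @whitney1 R m r l k * dowling m r k x =
   \sum_(0 <= l < n.+1) 'C(n, l)%:R * @euler_num R (n - l) * @whitney1 R m r l k * dowling m r k x.
  move=> k /andP[_ hk].
  rewrite [RHS](big_cat_nat (leq0n k) (ltnW hk)) /= [X in _ = X + _]big_nat_cond.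
  rewrite [X in _ = X + _]big1 ?add0r // => l /andP[/andP[_ hl] _].
  by rewrite W1van // mulr0 mul0r.
rewrite (eq_big_nat _ _ step1) exchange_big_nat euler_poly_eq.
apply: eq_big_nat => l /andP[_ hl].
rewrite (eq_bigr (fun k => ('C(n, l)%:R * @euler_num R (n - l)) *
   (@whitney1 R m r l k * dowling m r k x))); last by move=> k _; rewrite !mulrA.
by rewrite -mulr_sumr (@key R m r hm).
Qed.
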